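(* Let $\mathcal G$ be a core network with input nodes $\iota_1,\dots,\iota_n$ and output node $o$, let $\rho_k>\rho_{k+1}$ be adjacent absolutely super-simple nodes, and let $\mathcal B_i$ be an $\mathcal A_{\mathcal G}$-path component. Suppose there is $m$ and an $\iota_mo$-simple path $S_m$ such that nodes in $\mathcal B_i$ are $CS_m$-path equivalent to an absolutely simple node $\rho$ in $CS_m\setminus\mathcal B_i$ which belongs to $\mathcal L(\rho_k,\rho_{k+1})$. Then: (a) the nodes in $CS_m\setminus\mathcal B_i$ that are $CS_m$-path equivalent to $\mathcal B_i$ and are not absolutely appendage (including $\rho$) are absolutely simple nodes contained in $\mathcal L(\rho_k,\rho_{k+1})$, and none of them is absolutely super-simple; (b) for every $j=1,\dots,n$ there is an $\iota_jo$-simple path $S_j$ such that nodes in $\mathcal B_i$ are $CS_j$-path equivalent to $\rho$ in $CS_j\setminus\mathcal B_i$; (c) if $\tilde S_m$ is another $\iota_mo$-simple path such that nodes in $\mathcal B_i$ are $C\tilde S_m$-path equivalent to nodes in $C\tilde S_m\setminus\mathcal B_i$, then there is an absolutely simple node $\tau$ between $\rho_k$ and $\rho_{k+1}$ which is $C\tilde S_m$-path equivalent to $\mathcal B_i$.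
   Context: Node $b$ is downstream from $a$ if there is a directed path from $a$ to $b$. A core network: every node is upstream from $o$ and downstream from at least one input node. A simple path visits each node at most once; an $\iota_mo$-simple path is a simple path from $\iota_m$ to $o$. A node is $\iota_m$-simple if it lies on an $\iota_mo$-simple path, $\iota_m$-appendage if downstream from $\iota_m$ but not $\iota_m$-simple; absolutely simple (resp. absolutely appendage) if $\iota_m$-simple (resp. $\iota_m$-appendage) for every $m$. Absolutely super-simple: lies on every $\iota_mo$-simple path for every $m$; these are totally ordered $\rho_1>\cdots>\rho_p>o$ ($a>b$ iff $b$ comes after $a$ on every $\iota_mo$-simple path for every $m$); adjacent means consecutive. An absolutely simple node $\rho$ is between adjacent $\rho_k>\rho_{k+1}$ if for some $m$ some $\iota_mo$-simple path visits $\rho_k,\rho,\rho_{k+1}$ in that order; $\mathcal L(\rho_k,\rho_{k+1})$ is the subnetwork of absolutely simple nodes between them. $\mathcal A_{\mathcal G}$: all absolutely appendage nodes with arrows of $\mathcal G$ between them. For a subnetwork $\mathcal K$, nodes are $\mathcal K$-path equivalent if joined by directed paths inside $\mathcal K$ in both directions; a $\mathcal K$-path component is an equivalence class. For an $\iota_mo$-simple path $S$, $CS$ is the subnetwork of nodes of $\mathcal G$ not on $S$ with all arrows of $\mathcal G$ between them. *)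

(* Defs.v *)
From mathcomp Require Import all_boot.
From mathcomp Require Import boolp.
Set Implicit Arguments. Unset Strict Implicit. Unset Printing Implicit Defensive.

Section Network.
Variables (V : finType) (e : rel V) (n : nat) (iota : 'I_n -> V) (o : V).

Definition downstream (a b : V) : bool := connect e a b.

Definition io_network : Prop :=
  injective iota /\ forall m : 'I_n, iota m != o.

Definition core_network : Prop :=
  io_network /\
  forall x : V, downstream x o /\ exists m : 'I_n, downstream (iota m) x.

(* A simple path from a to b, given by its node list a :: s. *)
Definition simple_path (a b : V) (s : seq V) : bool :=
  [&& path e a s, uniq (a :: s) & last a s == b].

Definition io_simple (m : 'I_n) (s : seq V) : bool := simple_path (iota m) o s.

Definition on_path (m : 'I_n) (s : seq V) (x : V) : bool := x \in iota m :: s.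

Definition m_simple (m : 'I_n) (x : V) : Prop :=
  exists s, io_simple m s /\ on_path m s x.

Definition m_appendage (m : 'I_n) (x : V) : Prop :=
  downstream (iota m) x /\ ~ m_simple m x.

Definition abs_simple (x : V) : Prop := forall m, m_simple m x.
Definition abs_appendage (x : V) : Prop := forall m, m_appendage m x.

Definition abs_super_simple (x : V) : Prop :=
  forall m s, io_simple m s -> on_path m s x.

Definition comes_after (p : seq V) (x y : V) : bool :=
  [&& x \in p, y \in p & index x p < index y p].

Definition ss_gt (a b : V) : Prop :=
  forall m s, io_simple m s -> comes_after (iota m :: s) a b.

Definition ss_adjacent (a b : V) : Prop :=
  [/\ abs_super_simple a, abs_super_simple b, ss_gt a b &
      ~ exists c, [/\ abs_super_simple c, ss_gt a c & ss_gt c b]].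

Definition between (rk rk1 rho : V) : Prop :=
  abs_simple rho /\
  exists m s, [/\ io_simple m s, comes_after (iota m :: s) rk rho
                & comes_after (iota m :: s) rho rk1].

(* node set of the subnetwork L(rk, rk1) *)
Definition in_L (rk rk1 x : V) : Prop := between rk rk1 x.

(* subnetworks given by node predicates, with all arrows of G between them *)
Definition sub_rel (K : pred V) : rel V := [rel x y | [&& e x y, x \in K & y \in K]].

Definition pequiv (K : pred V) (x y : V) : bool :=
  [&& x \in K, y \in K, connect (sub_rel K) x y & connect (sub_rel K) y x].

Definition A_G : pred V := fun x => `[< abs_appendage x >].

Definition path_component (K : pred V) (B : {set V}) : Prop :=
  exists2 x, x \in K & B = [set y | pequiv K x y].

(* node predicate of CS, for S = iota m :: s *)
Definition CS (m : 'I_n) (s : seq V) : pred V := [pred x | x \notin iota m :: s].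

Definition equiv_to_set (K : pred V) (B : {set V}) (y : V) : Prop :=
  forall x, x \in B -> pequiv K x y.

End Network.

(* Main.v *)
Require Import Defs.
From mathcomp Require Import all_boot.
From mathcomp Require Import boolp.
From mathcomp Require Import zify.
From Stdlib Require Import Classical.
Set Implicit Arguments. Unset Strict Implicit. Unset Printing Implicit Defensive.

Section H.
Variables (V : finType) (e : rel V) (n : nat) (iota : 'I_n -> V) (o : V).

Lemma sub_rel_mono (K K' : pred V) a b : {subset K <= K'} ->
  connect (sub_rel e K) a b -> connect (sub_rel e K') a b.
Proof.
move=> sKK'; apply: connect_sub => x y /and3P[exy xK yK].
by apply: connect1; rewrite /sub_rel /= exy !sKK'.
Qed.

Lemma sub_rel_e (K : pred V) a b : connect (sub_rel e K) a b -> connect e a b.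
Proof. by apply: connect_sub => x y /and3P[exy _ _]; apply: connect1. Qed.

Lemma path_nodes_in (K : pred V) x p : path (sub_rel e K) x p -> {subset p <= K}.
Proof.
elim: p x => [|y p IH] x //= /andP[/and3P[_ _ yK] pp] z.
by rewrite inE => /orP[/eqP -> // | /(IH _ pp)].
Qed.

Lemma conn_simple (r : rel V) a b : connect r a b ->
  exists s, [&& path r a s, uniq (a :: s) & last a s == b].
Proof.
case/connectP=> p pp ->; case: (shortenP pp) => p' pp' up' _.
by exists p'; rewrite pp' up' eqxx.
Qed.

Lemma ass_noconn r j : (forall j, iota j != o) -> abs_super_simple e iota o r ->
  ~ connect (sub_rel e (predC1 r)) (iota j) o.
Proof.
move=> io ass /conn_simple[s /and3P[ps us /eqP ls]].
have hs : io_simple e iota o j s.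
  rewrite /io_simple /simple_path us ls eqxx !andbT.
  by apply: (sub_path _ ps) => x y /and3P[].
move: (ass j s hs); rewrite /on_path inE => /orP[/eqP rj | rs].
- case: s ps ls {us hs} => [|y s] /=.
    by move=> _ ji; move: (io j); rewrite ji eqxx.
  by rewrite -rj => /andP[/and3P[_ h _] _]; move: h; rewrite unfold_in eqxx.
- by move: (path_nodes_in ps rs); rewrite unfold_in eqxx.
Qed.

Lemma seg_conn (K : pred V) x p i j : path e x p -> i <= j -> j < size (x :: p) ->
  (forall k, i <= k <= j -> nth x (x :: p) k \in K) ->
  connect (sub_rel e K) (nth x (x :: p) i) (nth x (x :: p) j).
Proof.
move=> pp; elim: j => [|j IH] ij js hK.
  by rewrite leqn0 in ij; rewrite (eqP ij).
case: (ltngtP i j.+1) ij => [ilt|//|ieq] _; last by rewrite ieq.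
have hK' : forall k, i <= k <= j -> nth x (x :: p) k \in K.
  by move=> k /andP[ik kj]; apply: hK; rewrite ik (leq_trans kj).
apply: connect_trans (IH ilt (ltnW js) hK') _.
apply: connect1; rewrite /sub_rel /=.
have ij : i <= j by [].
rewrite (hK' j) ?ij ?leqnn //.
rewrite (hK j.+1) ?(ltnW ilt) ?leqnn // !andbT.
have js' : j < size p by [].
exact: (pathP x pp) j js'.
Qed.

Lemma seg_av x p a b r : path e x p -> uniq (x :: p) -> a \in x :: p -> b \in x :: p ->
  index a (x :: p) <= index b (x :: p) ->
  (r \in x :: p -> index r (x::p) < index a (x::p) \/ index b (x::p) < index r (x::p)) ->
  connect (sub_rel e (predC1 r)) a b.
Proof.
move=> pp up ap bp ab hr.
rewrite -(nth_index x ap) -(nth_index x bp).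
apply: seg_conn => //; first by rewrite index_mem.
move=> k /andP[ak kb]; rewrite inE /=; apply/eqP => kr.
have ks : k < size (x :: p) by apply: leq_ltn_trans kb _; rewrite index_mem.
have rin : r \in x :: p by rewrite -kr mem_nth.
have := index_uniq x ks up; rewrite kr => ir.
by case: (hr rin); rewrite ir => h; lia.
Qed.


Lemma index_inj_mem (x y : V) (l : seq V) : x \in l -> y \in l -> index x l = index y l -> x = y.
Proof. by move=> xl yl h; rewrite -(nth_index x xl) -(nth_index x yl) h. Qed.

Lemma io_facts j s : io_simple e iota o j s ->
  [/\ path e (iota j) s, uniq (iota j :: s), o \in iota j :: s,
      index o (iota j :: s) = size s & index (iota j) (iota j :: s) = 0].
Proof.
case/and3P=> ps us /eqP ls; split => //; first by rewrite -ls mem_last.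
  by rewrite -ls index_last.
by rewrite /= eqxx.
Qed.

Lemma index_le_o j s z : io_simple e iota o j s -> z \in iota j :: s ->
  index z (iota j :: s) <= index o (iota j :: s).
Proof.
move=> hs zl; case: (io_facts hs) => _ _ _ -> _.
by have := index_mem z (iota j :: s); rewrite zl /= ltnS => /idP.
Qed.

Lemma splice j1 s1 j2 s2 r : (forall j, iota j != o) -> abs_super_simple e iota o r ->
  io_simple e iota o j1 s1 -> io_simple e iota o j2 s2 ->
  exists s, io_simple e iota o j1 s /\
   forall z, z \in iota j1 :: s <->
     (z \in iota j1 :: s1 /\ index z (iota j1 :: s1) < index r (iota j1 :: s1)) \/
     (z \in iota j2 :: s2 /\ index r (iota j2 :: s2) <= index z (iota j2 :: s2)).
Proof.
move=> io ass h1 h2.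
have r1 := ass j1 s1 h1; have r2 := ass j2 s2 h2.
rewrite /on_path in r1 r2.
case: (io_facts h1) => p1 u1 o1 io1 ii1.
case: (io_facts h2) => p2 u2 o2 io2 ii2.
set l1 := iota j1 :: s1 in r1 u1 o1 io1 ii1 *.
set l2 := iota j2 :: s2 in r2 u2 o2 io2 ii2 *.
set i1 := index r l1; set i2 := index r l2.
set A := take i1 l1; set D := drop i2 l2.
have eD : D = r :: drop i2.+1 l2 by rewrite /D (drop_nth r) ?index_mem // nth_index.
have el1 : l1 = A ++ r :: drop i1.+1 l1.
  by rewrite -{1}(cat_take_drop i1 l1) (drop_nth r) ?index_mem // nth_index.
have el2 : l2 = take i2 l2 ++ D by rewrite cat_take_drop.
set R := A ++ D.
have hR : R = iota j1 :: behead R.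
  rewrite /R /A; case ei: i1 => [|k] /=; last by [].
  by rewrite eD; congr (_ :: _); rewrite -(nth_index r r1) -/i1 ei.
have memA z : z \in A <-> z \in l1 /\ index z l1 < i1.
  split; first by move=> zA; have zl := mem_take zA; rewrite -(in_take _ zl).
  by case=> zl; rewrite (in_take _ zl).
have memD z : z \in D <-> z \in l2 /\ i2 <= index z l2.
  have hd : ~~ has (mem (take i2 l2)) D by move: u2; rewrite {1}el2 cat_uniq => /and3P[].
  split.
    move=> zD; have zl : z \in l2 by rewrite el2 mem_cat zD orbT.
    split => //; rewrite leqNgt -(in_take _ zl); apply/negP => zt.
    by move/hasP: hd; apply; exists z.
  case=> zl; rewrite leqNgt -(in_take _ zl) => /negbTE zt.
  by move: zl; rewrite {1}el2 mem_cat zt.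
have memR z : z \in R <-> (z \in l1 /\ index z l1 < i1) \/ (z \in l2 /\ i2 <= index z l2).
  rewrite /R mem_cat; split.
    by case/orP => [/memA|/memD]; [left|right].
  by case => [/memA ->|/memD ->]; rewrite ?orbT.
exists (behead R); split; last by move=> z; rewrite -hR; apply: memR.
rewrite /io_simple /simple_path -hR; apply/and3P; split.
- have : sorted e R; last by rewrite {1}hR.
  rewrite /R eD sorted_cat_cons; apply/andP; split.
    have : sorted e l1 by [].
    by rewrite {1}el1 sorted_cat_cons => /andP[].
  have : sorted e l2 by [].
  by rewrite {1}el2 eD sorted_cat_cons => /andP[].
- rewrite /R cat_uniq; apply/and3P; split.
  + by move: u1; rewrite el1 cat_uniq => /andP[].
  + apply/hasP => -[z zD zA].
    have [zl1 zi1] := (memA z).1 zA.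
    have [zl2 zi2] := (memD z).1 zD.
    have zr : z != r by apply/eqP => zr; rewrite zr ltnn in zi1.
    have zi2' : i2 < index z l2.
      rewrite ltn_neqAle zi2 andbT; apply/negP => /eqP h.
      by move/eqP: zr; apply; apply: (index_inj_mem zl2 r2); rewrite -h.
    apply: (ass_noconn (j:=j1) io ass).
    apply: (@connect_trans _ _ z).
      apply: (seg_av p1 u1) => //; first by rewrite mem_head.
        by rewrite ii1.
      by move=> _; right.
    apply: (seg_av p2 u2) => //; first exact: (index_le_o h2).
    by move=> _; left.
  + by move: u2; rewrite el2 cat_uniq => /and3P[].
- have -> : last (iota j1) (behead R) = last (iota j1) R by rewrite {2}hR.
  rewrite /R eD last_cat /=.
  have hl : last (iota j2) l2 = last r (drop i2.+1 l2) by rewrite {1}el2 eD last_cat.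
  by case/and3P: h2 => _ _ /eqP <-; rewrite -hl.
Qed.


Lemma exists_io (core : core_network e iota o) j : exists s, io_simple e iota o j s.
Proof.
case: core => _ hc; have [h _] := hc (iota j).
by have [s hs] := conn_simple h; exists s.
Qed.

Lemma key rk rk1 j s u : (forall j, iota j != o) -> abs_super_simple e iota o rk ->
  abs_super_simple e iota o rk1 -> ss_gt e iota o rk rk1 -> io_simple e iota o j s ->
  u \in iota j :: s -> u != rk -> u != rk1 ->
  connect (sub_rel e (predC1 rk)) u rk1 -> connect (sub_rel e (predC1 rk1)) rk u ->
  comes_after (iota j :: s) rk u && comes_after (iota j :: s) u rk1.
Proof.
move=> io ak ak1 gt hs ul urk urk1 c1 c2.
have rkl := ak j s hs; have rk1l := ak1 j s hs.
rewrite /on_path in rkl rk1l.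
have := gt j s hs; rewrite /comes_after => /and3P[_ _ lt01].
case: (io_facts hs) => ps us ol io0 ii.
have iol := mem_head (iota j) s.
case: (ltngtP (index u (iota j :: s)) (index rk (iota j :: s))) => [h1|h1|h1].
- exfalso; apply: (ass_noconn (j:=j) io ak).
  apply: (@connect_trans _ _ u).
    apply: (seg_av ps us) => //; first by rewrite ii.
    by move=> _; right.
  apply: (connect_trans c1).
  apply: (seg_av ps us) => //; first exact: (index_le_o hs).
  by move=> _; left.
- case: (ltngtP (index u (iota j :: s)) (index rk1 (iota j :: s))) => [h2|h2|h2].
  + by rewrite /comes_after rkl ul rk1l.
  + exfalso; apply: (ass_noconn (j:=j) io ak1).
    apply: (@connect_trans _ _ rk).
      apply: (seg_av ps us) => //; first by rewrite ii.
      by move=> _; right.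
    apply: (connect_trans c2).
    apply: (seg_av ps us) => //; first exact: (index_le_o hs).
    by move=> _; left.
  + by exfalso; move/eqP: urk1; apply; exact: (index_inj_mem ul rk1l h2).
- by exfalso; move/eqP: urk; apply; exact: (index_inj_mem ul rkl h1).
Qed.

Lemma abs_simple_of (core : core_network e iota o) r j s u :
  abs_super_simple e iota o r -> io_simple e iota o j s -> u \in iota j :: s ->
  index r (iota j :: s) <= index u (iota j :: s) -> abs_simple e iota o u.
Proof.
move=> ar hs ul ri j'.
have io : forall j, iota j != o by case: core => -[].
have [s1 hs1] := exists_io core j'.
have [s' [hs' hm]] := splice io ar hs1 hs.
by exists s'; split => //; apply/hm; right.
Qed.

Lemma between_of (core : core_network e iota o) rk rk1 j s u :
  abs_super_simple e iota o rk -> abs_super_simple e iota o rk1 ->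
  ss_gt e iota o rk rk1 -> io_simple e iota o j s ->
  u \in iota j :: s -> u != rk -> u != rk1 ->
  connect (sub_rel e (predC1 rk)) u rk1 -> connect (sub_rel e (predC1 rk1)) rk u ->
  between e iota o rk rk1 u.
Proof.
move=> ak ak1 gt hs ul urk urk1 c1 c2.
have io : forall j, iota j != o by case: core => -[].
have /andP[h1 h2] := key io ak ak1 gt hs ul urk urk1 c1 c2.
split; last by exists j, s.
apply: (abs_simple_of core ak hs ul).
by case/and3P: h1 => _ _ /ltnW.
Qed.

Lemma psym (K : pred V) x y : pequiv e K x y -> pequiv e K y x.
Proof. by case/and4P=> a b c d; rewrite /pequiv a b c d. Qed.

Lemma ptrans (K : pred V) x y z : pequiv e K x y -> pequiv e K y z -> pequiv e K x z.
Proof.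
case/and4P=> a b c d /and4P[_ b' c' d'].
by rewrite /pequiv a b' (connect_trans c c') (connect_trans d' d).
Qed.

Lemma conn_restrict (K K' : pred V) a b : a \in K -> connect (sub_rel e K) a b ->
  (forall z, z \in K -> connect (sub_rel e K) a z -> connect (sub_rel e K) z b -> z \in K') ->
  connect (sub_rel e K') a b.
Proof.
move=> aK /connectP[p pp ->] {b}.
elim: p a aK pp => [|y p IH] a aK //= /andP[/and3P[eay _ yK] pp] hz.
have cyl : connect (sub_rel e K) y (last y p) by apply/connectP; exists p.
have eay' : sub_rel e K a y by rewrite /sub_rel /= eay aK yK.
apply: (@connect_trans _ _ y).
  apply: connect1; rewrite /sub_rel /= eay hz ?connect0 ?hz //.
  - exact: connect1.
  - exact: connect_trans (connect1 eay') cyl.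
apply: IH => // z zK cyz czl; apply: hz => //.
exact: connect_trans (connect1 eay') cyz.
Qed.

Lemma on_conn j s z : io_simple e iota o j s -> z \in iota j :: s -> connect e (iota j) z.
Proof.
move=> hs zl; case: (io_facts hs) => ps us _ _ ii.
apply: (@sub_rel_e predT).
have := @seg_conn predT _ _ 0 (index z (iota j :: s)) ps (leq0n _).
by rewrite index_mem nth_index //= => ->.
Qed.

Lemma inCS j s z : (z \in CS iota j s) = (z \notin iota j :: s).
Proof. by []. Qed.

End H.

Theorem lemma3p22 (V : finType) (e : rel V) (n : nat) (iota : 'I_n -> V) (o : V)
  (rk rk1 rho : V) (B : {set V}) (m : 'I_n) (Sm : seq V) :
  core_network e iota o ->
  ss_adjacent e iota o rk rk1 ->
  path_component e (A_G e iota o) B ->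
  io_simple e iota o m Sm ->
  rho \in CS iota m Sm -> rho \notin B ->
  abs_simple e iota o rho ->
  in_L e iota o rk rk1 rho ->
  equiv_to_set e (CS iota m Sm) B rho ->
  (* (a) *)
  (forall y : V, y \in CS iota m Sm -> y \notin B ->
     equiv_to_set e (CS iota m Sm) B y ->
     ~ abs_appendage e iota o y ->
     [/\ abs_simple e iota o y, in_L e iota o rk rk1 y &
         ~ abs_super_simple e iota o y])
  /\
  (* (b) *)
  (forall j : 'I_n, exists Sj : seq V,
     [/\ io_simple e iota o j Sj, rho \in CS iota j Sj &
         equiv_to_set e (CS iota j Sj) B rho])
  /\
  (* (c) *)
  (forall St : seq V, io_simple e iota o m St ->
     (exists y : V, [/\ y \in CS iota m St, y \notin B &
                       equiv_to_set e (CS iota m St) B y]) ->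
     exists tau : V, [/\ abs_simple e iota o tau, between e iota o rk rk1 tau &
                         equiv_to_set e (CS iota m St) B tau]).
Proof.
move=> core adj pcB hSm rhoC rhoB rhoAS rhoL heq.
have io : forall j, iota j != o by case: core => -[].
case: adj => ak ak1 gt _.
case: pcB => x0 x0A defB.
have x0B : x0 \in B by rewrite defB inE /pequiv x0A connect0.
have CSk : forall j s, io_simple e iota o j s -> {subset CS iota j s <= predC1 rk}.
  move=> j s h z; rewrite inCS !inE; apply: contraNneq => ->; exact: ak j s h.
have CSk1 : forall j s, io_simple e iota o j s -> {subset CS iota j s <= predC1 rk1}.
  move=> j s h z; rewrite inCS !inE; apply: contraNneq => ->; exact: ak1 j s h.
have CSne : forall j s z, io_simple e iota o j s -> z \in CS iota j s -> (z != rk) && (z != rk1).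
  by move=> j s z h zC; have := CSk j s h z zC; have := CSk1 j s h z zC; rewrite !inE => -> ->.
case: rhoL => _ [m0 [s0 [h0 c1 c2]]].
case: (io_facts h0) => p0 u0 _ _ _.
case/and3P: c1 => rk0 rho0 i1; case/and3P: c2 => _ rk10 i2.
have rin : connect (sub_rel e (predC1 rk1)) rk rho.
  apply: (seg_av p0 u0) => //; first exact: ltnW.
  by move=> _; right.
have rout : connect (sub_rel e (predC1 rk)) rho rk1.
  apply: (seg_av p0 u0) => //; first exact: ltnW.
  by move=> _; left.
have hx0 := heq x0 x0B.
have inner : forall u j s, io_simple e iota o j s -> u \in iota j :: s -> u != rk -> u != rk1 ->
   connect (sub_rel e (predC1 rk)) u rho -> connect (sub_rel e (predC1 rk1)) rho u ->
   between e iota o rk rk1 u.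
  move=> u j s hs us u1 u2 c1' c2'.
  apply: (between_of core ak ak1 gt hs us u1 u2).
    exact: connect_trans c1' rout.
  exact: connect_trans rin c2'.
have dsr : forall j, connect e (iota j) rho.
  by move=> j; have [s [hs rs]] := rhoAS j; apply: (on_conn hs).
split.
  move=> y yC yB hy nA.
  have [j nj] : exists j, ~ m_appendage e iota o j y by apply: not_all_ex_not.
  have pxy := hy x0 x0B.
  have pyr : pequiv e (CS iota m Sm) y rho := ptrans (psym pxy) hx0.
  case/and4P: (pyr) => _ _ cyr cry.
  have ms : m_simple e iota o j y.
    apply: NNPP => nms; apply: nj; split => //.
    rewrite /downstream; apply: connect_trans (dsr j) _; exact: sub_rel_e cry.
  case: ms => s [hs ys].
  have /andP[yk yk1] := CSne m Sm y hSm yC.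
  have bt := inner y j s hs ys yk yk1 (sub_rel_mono (CSk m Sm hSm) cyr) (sub_rel_mono (CSk1 m Sm hSm) cry).
  split; [exact: bt.1 | exact: bt | ].
  by move=> assy; move: (assy m Sm hSm); rewrite /on_path; move: yC; rewrite inCS => /negbTE ->.
split.
  move=> j.
  have [s1 hs1] := exists_io core j.
  have [sj [hsj hmem]] := splice io ak hs1 hSm.
  have notin : forall z, z \in CS iota m Sm -> connect (sub_rel e (CS iota m Sm)) z rho -> z \in CS iota j sj.
    move=> z zC zr; rewrite inCS; apply/negP => /hmem [[zl1 zi] | [zl2 _]].
    - apply: (ass_noconn (j:=j) io ak).
      case: (io_facts hs1) => p1 u1 _ _ ii1.
      case: (io_facts hSm) => pm um om _ _.
      apply: (@connect_trans _ _ z).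
        apply: (seg_av p1 u1) => //; first exact: mem_head.
          by rewrite ii1.
        by move=> _; right.
      apply: (@connect_trans _ _ rho); first exact: sub_rel_mono (CSk m Sm hSm) zr.
      apply: (connect_trans rout).
      have := gt m Sm hSm; case/and3P => rkm rk1m ikm.
      apply: (seg_av pm um) => //; first exact: (index_le_o hSm).
      by move=> _; left.
    - by move: zC; rewrite inCS zl2.
  exists sj; split => //; first exact: notin rho rhoC (connect0 _ _).
  move=> x xB; case/and4P: (heq x xB) => xC rC cxr crx.
  rewrite /pequiv (notin x xC cxr) (notin rho rC (connect0 _ _)) /=.
  apply/andP; split.
    apply: (conn_restrict xC cxr) => z zC _ czr; exact: notin z zC czr.
  apply: (conn_restrict rC crx) => z zC _ czx; exact: notin z zC (connect_trans czx cxr).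
move=> St hSt [y [yC yB hy]].
have px0y := hy x0 x0B.
have [u [pu uA]] : exists u, pequiv e (CS iota m St) x0 u /\ u \notin A_G e iota o.
  apply: NNPP => hno.
  have allA : forall z, pequiv e (CS iota m St) x0 z -> z \in A_G e iota o.
    by move=> z pz; apply/negPn/negP => zn; apply: hno; exists z.
  move/negP: yB; apply; rewrite defB inE /pequiv x0A (allA y px0y) /=.
  case/and4P: (px0y) => x0C yC' c1' c2'.
  apply/andP; split.
    apply: (conn_restrict x0C c1') => z zC c1z cz; apply: allA.
    by rewrite /pequiv x0C zC c1z (connect_trans cz c2').
  apply: (conn_restrict yC' c2') => z zC cyz czx; apply: allA.
  by rewrite /pequiv x0C zC czx (connect_trans c1' cyz).
have nAu : ~ abs_appendage e iota o u by move=> h; move/negP: uA; apply; apply/asboolP.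
have x0app : abs_appendage e iota o x0 by apply/asboolP.
have [j nj] : exists j, ~ m_appendage e iota o j u by apply: not_all_ex_not.
case/and4P: (pu) => x0C uC cxu cux.
have ms : m_simple e iota o j u.
  apply: NNPP => nms; apply: nj; split => //.
  rewrite /downstream; apply: connect_trans (x0app j).1 _; exact: sub_rel_e cxu.
case: ms => s [hs us].
have /andP[uk uk1] := CSne m St u hSt uC.
case/and4P: hx0 => x0Cm rCm cxr crx.
have bt : between e iota o rk rk1 u.
  apply: (inner u j s hs us uk uk1).
    apply: (@connect_trans _ _ x0); first exact: sub_rel_mono (CSk m St hSt) cux.
    exact: sub_rel_mono (CSk m Sm hSm) cxr.
  apply: (@connect_trans _ _ x0); first exact: sub_rel_mono (CSk1 m Sm hSm) crx.
  exact: sub_rel_mono (CSk1 m St hSt) cxu.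
exists u; split; [exact: bt.1 | exact: bt | ].
move=> x xB; exact: ptrans (hy x xB) (ptrans (psym px0y) pu).
Qed.
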